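(* Let $\Theta_4$ have vertices $v_1,v_2$ and edges $e_1,\dots,e_4$, and let $h_{i,j}$ be the half-edge incident on $v_i$ and $e_j$. Define \[A_2=\sum_{\sigma\in\Sigma_4}\mathrm{sgn}(\sigma)(e_1-e_{\sigma(3)})(h_{1,\sigma(1)}-h_{1,1})(h_{2,\sigma(2)}-h_{2,1})\] in the reduced Świątkowski complex of $\Theta_4$ (degree $2$, weight $3$). Then $A_2$ is a cycle, and its class $[A_2]$ generates $H_2(B_3(\Theta_4))$.
   Context: $\Theta_4$ is the graph with two vertices and four edges joining them. The Świątkowski complex of a graph $\Gamma$ is $S(\Gamma)=\mathbb{Z}[E]\otimes\bigotimes_{v\in V}\mathbb{Z}\langle\varnothing,v,h\in H(v)\rangle$ ($H(v)$ the half-edges at $v$, $E$ the edges), bigraded by $|\varnothing|=(0,0)$, $|v|=|e|=(0,1)$, $|h|=(1,1)$ (homological degree, weight), with differential the $\mathbb{Z}[E]$-linear derivation (with Koszul signs, half-edge generators at different vertices anticommuting) determined by $\partial h=e(h)-v(h)$; factors $\varnothing$ are omitted from notation. The reduced complex $\widetilde S(\Gamma)$ replaces each factor by the submodule spanned by $\varnothing$ and the differences of half-edges at $v$; it is quasi-isomorphic to $S(\Gamma)$ when $\Gamma$ has no isolated vertices. The homology of $S(\Gamma)$ in degree $i$ and weight $k$ is naturally isomorphic to $H_i(B_k(\Gamma))$, where $B_k(\Gamma)$ is the unordered configuration space of $k$ points. *)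

(* Defs.v *)
From HB Require Import structures.
From mathcomp Require Import all_boot all_order all_algebra all_fingroup.
Set Implicit Arguments. Unset Strict Implicit. Unset Printing Implicit Defensive.
Import GRing.Theory Num.Theory.
Local Open Scope ring_scope.

(* A finite graph, given by half-edge data: each half-edge h has a vertex
   [vert h] and an edge [edg h].  H(v) = {h | vert h = v}. *)

(* Generators of S(Γ) as a Z-module: a monomial in Z[E] (exponent vector)
   together with a state: for each vertex v, the tensor factor chosen in
   Z<∅, v, h ∈ H(v)> :  None = ∅,  Some None = v,  Some (Some h) = h. *)
Definition mono (E : finType) := {ffun E -> nat}.
Definition state (V H : finType) := {ffun V -> option (option H)}.
Definition gen (V E H : finType) := (mono E * state V H)%type.

Definition valid_state (V H : finType) (vert : H -> V) (s : state V H) : bool :=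
  [forall v, forall h, (s v == Some (Some h)) ==> (vert h == v)].

Definition is_half (H : finType) (x : option (option H)) : bool :=
  if x is Some (Some _) then true else false.

Definition sdeg (V H : finType) (s : state V H) : nat := #|[set v | is_half (s v)]|.

Definition gwt (V E H : finType) (g : gen V E H) : nat :=
  (\sum_(e : E) g.1 e)%N + #|[set v | g.2 v != None]|.

(* In each weight there are only
   finitely many generators, so such a coefficient function has finite
   support automatically. *)
Definition is_chain (V E H : finType) (vert : H -> V) (i k : nat)
    (c : gen V E H -> int) : Prop :=
  forall g, c g != 0 -> [&& valid_state vert g.2, sdeg g.2 == i & gwt g == k].

Definition decr (E : finType) (m : mono E) (e : E) : mono E :=
  [ffun e' => if e' == e then (m e').-1 else m e'].

Definition upd (V H : finType) (s : state V H) (v : V) (x : option (option H))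
  : state V H := [ffun v' => if v' == v then x else s v'].

(* Koszul sign: (-1)^(number of half-edge factors strictly before v),
   the tensor factors being ordered by the enumeration order of V. *)
Definition ksign (V H : finType) (s : state V H) (v : V) : int :=
  (-1) ^+ #|[set v' | (enum_rank v' < enum_rank v)%N && is_half (s v')]|.

(* The differential: the Z[E]-linear derivation with ∂h = e(h) - v(h),
   written out on coefficients: the coefficient of the generator (m, s) in ∂c. *)
Definition sdiff (V E H : finType) (vert : H -> V) (edg : H -> E)
    (c : gen V E H -> int) (g : gen V E H) : int :=
  let m := g.1 in let s := g.2 in
  \sum_(v : V)
    match s v with
    | None => \sum_(h : H | vert h == v)
                if (0 < m (edg h))%N
                then ksign s v * c (decr m (edg h), upd s v (Some (Some h)))
                else 0
    | Some None => - \sum_(h : H | vert h == v)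
                      ksign s v * c (m, upd s v (Some (Some h)))
    | Some (Some _) => 0
    end.

(* vertices v_1, v_2 = 0, 1 : 'I_2 ; edges e_1..e_4 = 0..3 : 'I_4 ;
   half-edge h_{i,j} = (i-1, j-1) : 'I_2 * 'I_4. *)
Definition T4V := 'I_2.
Definition T4E := 'I_4.
Definition T4H := ('I_2 * 'I_4)%type.
Definition t4vert (h : T4H) : T4V := h.1.
Definition t4edg (h : T4H) : T4E := h.2.

Definition t4gen := gen T4V T4E T4H.

(* basis element  e_j h_{1,a} h_{2,b}  (0-based indices) *)
Definition t4term (j a b : 'I_4) : t4gen :=
  ([ffun e => if e == j then 1%N else 0%N],
   [ffun v : 'I_2 => if v == ord0 then Some (Some (ord0, a))
                     else Some (Some (v, b))]).

Definition delta (g0 : t4gen) (g : t4gen) : int := (g == g0)%:Z.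

(* e_j (h_{1,a} - h_{1,1}) (h_{2,b} - h_{2,1}) *)
Definition t4pprod (j a b : 'I_4) (g : t4gen) : int :=
  delta (t4term j a b) g - delta (t4term j ord0 b) g
  - delta (t4term j a ord0) g + delta (t4term j ord0 ord0) g.

Definition A2 (g : t4gen) : int :=
  \sum_(s : 'S_4) (-1) ^+ s *
    (t4pprod ord0 (s ord0) (s 1) g - t4pprod (s 2) (s ord0) (s 1) g).

(* Main.v *)
Require Import Defs.
From mathcomp Require Import all_boot all_order all_algebra all_fingroup.
From mathcomp Require Import zify ring lra.
From Stdlib Require Import FunctionalExtensionality.
Set Implicit Arguments. Unset Strict Implicit. Unset Printing Implicit Defensive.
Import GRing.Theory Num.Theory.
Local Open Scope ring_scope.

Definition o0 : 'I_4 := ord0.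
Definition o1 : 'I_4 := @Ordinal 4 1 isT.
Definition o2 : 'I_4 := @Ordinal 4 2 isT.
Definition o3 : 'I_4 := @Ordinal 4 3 isT.

Lemma ord4_cases (j : 'I_4) : j = o0 \/ j = o1 \/ j = o2 \/ j = o3.
Proof.
case: j => [[|[|[|[|//]]]] H].
- by left; apply: val_inj.
- by right; left; apply: val_inj.
- by right; right; left; apply: val_inj.
- by right; right; right; apply: val_inj.
Qed.

Lemma signN (b : bool) : (-1) ^+ (~~ b) = - ((-1) ^+ b) :> int.
Proof. by case: b; rewrite /= ?expr1 ?expr0 ?opprK. Qed.

Lemma sign_cancel (x y : 'I_4) (F : {perm 'I_4} -> int) :
  x != y -> (forall s, F (tperm x y * s)%g = F s) ->
  \sum_(s : 'S_4) (-1) ^+ s * F s = 0.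
Proof.
move=> xy HF.
set S := \sum_(s : 'S_4) _.
have : S = - S.
  rewrite {1}/S (reindex_inj (mulgI (tperm x y))) /= /S -sumrN.
  apply: eq_bigr => s _; rewrite HF odd_mul_tperm xy /= signN mulNr //.
move=> HS; lia.
Qed.

Definition alpha (j a b : 'I_4) : int :=
  - \sum_(s : 'S_4) (-1) ^+ s * ((s o2 == j) && (s o0 == a) && (s o1 == b))%:Z.

Lemma alpha_swap (x y : 'I_4) j a b j' a' b' : x != y ->
  (forall s : 'S_4, ((s (tperm x y o2) == j) && (s (tperm x y o0) == a) && (s (tperm x y o1) == b)) =
      ((s o2 == j') && (s o0 == a') && (s o1 == b'))) ->
  alpha j a b = - alpha j' a' b'.
Proof.
move=> xy H.
rewrite /alpha opprK (reindex_inj (mulgI (tperm x y))) /= -sumrN.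
apply: eq_bigr => s _.
by rewrite odd_mul_tperm xy /= signN mulNr !permM opprK H.
Qed.

Lemma alpha_ja j a b : alpha j a b = - alpha a j b.
Proof.
apply: (alpha_swap (x:=o0) (y:=o2)) => // s.
rewrite tpermR tpermL tpermD //.
by case: (s o0 == j); case: (s o2 == a); case: (s o1 == b).
Qed.

Lemma alpha_jb j a b : alpha j a b = - alpha b a j.
Proof.
apply: (alpha_swap (x:=o1) (y:=o2)) => // s.
rewrite tpermR tpermL tpermD //.
by case: (s o1 == j); case: (s o2 == b); case: (s o0 == a).
Qed.

Lemma sum_ind (Q : bool) (c : 'I_4) : \sum_(b : 'I_4) (Q && (c == b))%:Z = Q%:Z :> int.
Proof.
rewrite (bigD1 c) //= eqxx andbT big1 ?addr0 // => b /negbTE.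
by rewrite eq_sym => ->; rewrite andbF.
Qed.

Lemma alpha_rowb j a : \sum_b alpha j a b = 0.
Proof.
rewrite /alpha sumrN exchange_big /=.
under eq_bigr do rewrite -mulr_sumr sum_ind.
rewrite (@sign_cancel o1 o3) ?oppr0 // => s.
by rewrite !permM tpermD // tpermD.
Qed.

Lemma alpha_rowa j b : \sum_a alpha j a b = 0.
Proof.
rewrite /alpha sumrN exchange_big /=.
under eq_bigr do rewrite -mulr_sumr.
have E : forall s : 'S_4, \sum_(i < 4) ((s o2 == j) && (s o0 == i) && (s o1 == b))%:Z
   = ((s o2 == j) && (s o1 == b))%:Z :> int.
  move=> s; rewrite (bigD1 (s o0)) //= eqxx andbT big1 ?addr0 // => i /negbTE.
  by rewrite eq_sym => ->; rewrite andbF.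
under eq_bigr do rewrite E.
rewrite (@sign_cancel o0 o3) ?oppr0 // => s.
by rewrite !permM tpermD // tpermD.
Qed.

Lemma alpha201 : alpha o2 o0 o1 = -1.
Proof.
rewrite /alpha (bigD1 1%g) //= !perm1 !eqxx /= odd_perm1 /= expr0 mul1r.
rewrite big1 ?addr0 // => s Hs.
case E: ((s o2 == o2) && (s o0 == o0) && (s o1 == o1)); last by rewrite mulr0.
move: E => /andP [/andP [/eqP E2 /eqP E0] /eqP E1].
have E3 : s o3 = o3.
  have := ord4_cases (s o3) => -[H|[H|[H|H]]] //.
  - by move: H; rewrite -E0 => /perm_inj.
  - by move: H; rewrite -E1 => /perm_inj.
  - by move: H; rewrite -E2 => /perm_inj.
case/eqP: Hs; apply/permP => i; rewrite perm1.
by have := ord4_cases i => -[->|[->|[->|->]]].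
Qed.

Definition vmax : 'I_2 := ord_max.
Definition ind (j : 'I_4) : mono T4E := [ffun e => if e == j then 1%N else 0%N].
Definition ind2 (j k : 'I_4) : mono T4E := [ffun e => ((e == j) + (e == k))%N].

Lemma ind_eq j j' : (ind j == ind j') = (j == j').
Proof.
apply/eqP/eqP => [|->//] /ffunP /(_ j); rewrite !ffunE eqxx.
by case: eqP.
Qed.

Lemma ind2C j k : ind2 j k = ind2 k j.
Proof. by apply/ffunP => e; rewrite !ffunE addnC. Qed.

Lemma decr_ind (m : mono T4E) (e j : T4E) : ((0 < m e)%N && (decr m e == ind j)) = (m == ind2 j e).
Proof.
apply/idP/eqP.
- case/andP=> me /eqP D; apply/ffunP => x; have := congr1 (fun f : mono T4E => f x) D.
  rewrite !ffunE; case: (x =P e) => [->|_]; first by move: me; case: (m e) => //= n _; case: (e == j) => /=; lia.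
  by case: (x == j) => /=; lia.
- move=> ->; rewrite !ffunE eqxx addn1 /=; apply/eqP/ffunP => x.
  rewrite !ffunE; case: (x =P e) => [->|_]; case: (_ == j) => //=; lia.
Qed.

Lemma sumH (v : 'I_2) (F : T4H -> int) :
  \sum_(h : T4H | t4vert h == v) F h = \sum_(e : 'I_4) F (v, e).
Proof.
transitivity (\sum_(i | i == v) \sum_(e : 'I_4) F (i, e)); last by rewrite big_pred1_eq.
rewrite pair_big_dep /=; apply: eq_big => [[i e]|[i e] _] //=; by rewrite andbT.
Qed.

Lemma sum2 (F : 'I_2 -> int) : \sum_(v : 'I_2) F v = F ord0 + F vmax.
Proof.
rewrite (bigD1 ord0) //= (bigD1 vmax) //= big1 ?addr0 // => v.
by case: v => [[|[|//]] H] //=.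
Qed.

Lemma ksign0 (s : state T4V T4H) : ksign s ord0 = 1.
Proof.
rewrite /ksign; set A := [set _ | _].
have -> : A = set0.
  by apply/setP => v; rewrite !inE !(@enum_rank_ord 2) /=.
by rewrite cards0 expr0.
Qed.

Lemma ksign1 (s : state T4V T4H) : ksign s vmax = if is_half (s ord0) then -1 else 1.
Proof.
rewrite /ksign; set A := [set _ | _].
have -> : A = if is_half (s ord0) then [set ord0] else set0.
  apply/setP => v; rewrite !inE !(@enum_rank_ord 2) /=.
  case: v => [[|[|//]] H] /=.
    by rewrite (_ : Ordinal H = ord0) //; [case: (is_half _); rewrite ?inE //| apply: val_inj].
  by case: (is_half _); rewrite ?inE.
by case: (is_half _); rewrite ?cards1 ?cards0 ?expr1 ?expr0.
Qed.

Definition Cf (f : 'I_4 -> 'I_4 -> 'I_4 -> int) (g : t4gen) : int :=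
  match g.2 ord0, g.2 vmax with
  | Some (Some h), Some (Some h') =>
      ((h.1 == ord0) && (h'.1 == vmax))%:Z * \sum_j (g.1 == ind j)%:Z * f j h.2 h'.2
  | _, _ => 0 end.

Lemma upd0 (s : state T4V T4H) x : (upd s ord0 x) ord0 = x.
Proof. by rewrite ffunE eqxx. Qed.
Lemma upd0m (s : state T4V T4H) x : (upd s ord0 x) vmax = s vmax.
Proof. by rewrite ffunE. Qed.
Lemma upd1 (s : state T4V T4H) x : (upd s vmax x) vmax = x.
Proof. by rewrite ffunE eqxx. Qed.
Lemma upd10 (s : state T4V T4H) x : (upd s vmax x) ord0 = s ord0.
Proof. by rewrite ffunE. Qed.

Lemma CfU0 f (m' : mono T4E) (s : state T4V T4H) e :
  Cf f (m', upd s ord0 (Some (Some (ord0, e)))) =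
  match s vmax with
  | Some (Some h') => (h'.1 == vmax)%:Z * \sum_j (m' == ind j)%:Z * f j e h'.2
  | _ => 0 end.
Proof. by rewrite /Cf /= upd0 upd0m; case: (s vmax) => [[h|]|] //=; rewrite eqxx. Qed.

Lemma CfU1 f (m' : mono T4E) (s : state T4V T4H) e :
  Cf f (m', upd s vmax (Some (Some (vmax, e)))) =
  match s ord0 with
  | Some (Some h) => (h.1 == ord0)%:Z * \sum_j (m' == ind j)%:Z * f j h.2 e
  | _ => 0 end.
Proof. by rewrite /Cf /= upd1 upd10; case: (s ord0) => [[h|]|] //=; rewrite eqxx andbT. Qed.

Lemma ifdecr (m : mono T4E) (e : 'I_4) (k c : int) (F : 'I_4 -> int) :
  (if (0 < m e)%N then k * (c * \sum_j (decr m e == ind j)%:Z * F j) else 0)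
  = k * (c * \sum_j (m == ind2 j e)%:Z * F j).
Proof.
case: ifP => H.
- by congr (_ * (_ * _)); apply: eq_bigr => j _; rewrite -decr_ind H.
- by rewrite big1 ?mulr0 // => j _; rewrite -decr_ind H mul0r.
Qed.

Lemma sdiffCf f (m : mono T4E) (s : state T4V T4H) :
  sdiff t4vert t4edg (Cf f) (m, s) =
  match s ord0, s vmax with
  | None, Some (Some h') =>
      (h'.1 == vmax)%:Z * \sum_e \sum_j (m == ind2 j e)%:Z * f j e h'.2
  | Some None, Some (Some h') =>
      - ((h'.1 == vmax)%:Z * \sum_e \sum_j (m == ind j)%:Z * f j e h'.2)
  | Some (Some h), None =>
      - ((h.1 == ord0)%:Z * \sum_e \sum_j (m == ind2 j e)%:Z * f j h.2 e)
  | Some (Some h), Some None =>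
      (h.1 == ord0)%:Z * \sum_e \sum_j (m == ind j)%:Z * f j h.2 e
  | _, _ => 0 end.
Proof.
rewrite /sdiff /= sum2 ksign0 ksign1.
rewrite !sumH /=.
case E0: (s ord0) => [[h|]|]; case E1: (s vmax) => [[h'|]|] /=.
all: try (under eq_bigr => e _ do rewrite ?CfU0 ?CfU1 ?E0 ?E1).
all: try (under [X in _ + X]eq_bigr => e _ do rewrite ?CfU0 ?CfU1 ?E0 ?E1).
all: try (under [X in _ - X]eq_bigr => e _ do rewrite ?CfU0 ?CfU1 ?E0 ?E1).
all: rewrite /= ?add0r ?addr0.
all: try (by rewrite !big1 ?oppr0 ?subr0 ?addr0 // => e _; rewrite ?if_same).
all: try (under eq_bigr => e _ do rewrite ?ifdecr ?mul1r ?mulN1r).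
all: by rewrite ?sumrN ?opprK -?mulr_sumr.
Qed.

Lemma t4term_props j a b :
  [&& valid_state t4vert (t4term j a b).2, sdeg (t4term j a b).2 == 2%N
    & gwt (t4term j a b) == 3%N].
Proof.
apply/and3P; split.
- apply/forallP => v; apply/forallP => h; apply/implyP; rewrite ffunE.
  by case: ifP => [/eqP -> | _] /eqP [<-].
- rewrite /sdeg; set A := [set _ | _].
  have -> : A = setT by apply/setP => v; rewrite !inE ffunE; case: ifP.
  by rewrite cardsT card_ord.
- rewrite /gwt /=; set A := [set _ | _].
  have -> : A = setT by apply/setP => v; rewrite !inE ffunE; case: ifP.
  rewrite cardsT card_ord (bigD1 j) //= ffunE eqxx big1 //= => e /negbTE.
  by rewrite ffunE => ->.
Qed.

Lemma vcases (v : 'I_2) : v = ord0 \/ v = vmax.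
Proof. by case: v => [[|[|//]] H]; [left|right]; apply: val_inj. Qed.

Lemma sum1_ind (m : mono T4E) : (\sum_(e : T4E) m e)%N = 1%N -> exists j, m = ind j.
Proof.
move=> Hs.
have [j Hj] : exists j, m j != 0%N.
  apply/existsP; apply: contraT; rewrite negb_exists => /forallP H.
  by move: Hs; rewrite big1 // => e _; move: (H e); rewrite negbK => /eqP.
exists j; move: Hs; rewrite (bigD1 j) //= => Hs.
have Hr : (\sum_(i | i != j) m i = 0)%N by move: Hj Hs; case: (m j) => //= n _; lia.
move/eqP: Hr; rewrite sum_nat_eq0 => /forallP Hr.
apply/ffunP => e; rewrite ffunE; case: ifP => [/eqP -> | /negbT He].
- by move: Hj Hs; move/eqP: (Hr j); case: (m j) => //= n _; lia.
- by move: (Hr e); rewrite He /= => /eqP.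
Qed.

Lemma support (g : t4gen) :
  [&& valid_state t4vert g.2, sdeg g.2 == 2%N & gwt g == 3%N] ->
  exists j a b, g = t4term j a b.
Proof.
case: g => m s /and3P [/forallP Hv /eqP Hd /eqP Hw] /=.
have Hall : [set v | is_half (s v)] = setT.
  by apply/eqP; rewrite eqEcard subsetT cardsT card_ord; move: Hd; rewrite /sdeg /= => ->.
have Hh : forall v, exists h, s v = Some (Some h) /\ h.1 = v.
  move=> v; have : v \in [set v | is_half (s v)] by rewrite Hall inE.
  rewrite inE; case E: (s v) => [[h|]|] // _; exists h; split => //.
  by move: (Hv v) => /forallP /(_ h); rewrite E eqxx /= => /eqP.
have Hn : [set v | s v != None] = setT.
  apply/setP => v; rewrite !inE; by have [h [-> _]] := Hh v.
move: Hw; rewrite /gwt /= Hn cardsT card_ord => Hw.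
have [j Hj] : exists j, m = ind j by apply: sum1_ind; apply: (@addIn 2); exact: Hw.
have [h0 [E0 H0]] := Hh ord0; have [h1 [E1 H1]] := Hh vmax.
exists j, h0.2, h1.2; rewrite /t4term Hj; congr pair.
apply/ffunP => v; rewrite ffunE; case: (vcases v) => ->.
- by rewrite eqxx E0 -H0 -surjective_pairing.
- by rewrite /= E1 -H1 -surjective_pairing.
Qed.

Lemma one4 : (1 : 'I_4) = o1. Proof. by apply: val_inj. Qed.
Lemma two4 : (2 : 'I_4) = o2. Proof. by apply: val_inj. Qed.

Lemma t4term_eq j a b j' a' b' :
  (t4term j a b == t4term j' a' b') = [&& j == j', a == a' & b == b'].
Proof.
apply/eqP/and3P => [[E1 E2]|[/eqP-> /eqP-> /eqP->] //].
have := congr1 (fun f : state T4V T4H => f ord0) E2.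
have := congr1 (fun f : state T4V T4H => f vmax) E2.
rewrite !ffunE /= => -[->] [->]; split => //.
by rewrite -ind_eq; apply/eqP.
Qed.

Lemma delta_term j a b j' a' b' :
  delta (t4term j' a' b') (t4term j a b) = ((j == j') && (a == a') && (b == b'))%:Z.
Proof. by rewrite /delta t4term_eq andbA. Qed.

Lemma A2_term j a b : A2 (t4term j a b) = alpha j a b.
Proof.
pose K (s : 'S_4) := (j == o0)%:Z * (((a == s o0) && (b == s o1))%:Z
   - ((a == o0) && (b == s o1))%:Z - ((a == s o0) && (b == o0))%:Z
   + ((a == o0) && (b == o0))%:Z).
pose L1 (s : 'S_4) := ((s o2 == j) && (s o0 == a) && (s o1 == b))%:Z.
pose L2 (s : 'S_4) := ((s o2 == j) && (a == o0) && (s o1 == b))%:Z.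
pose L3 (s : 'S_4) := ((s o2 == j) && (s o0 == a) && (b == o0))%:Z.
pose L4 (s : 'S_4) := ((s o2 == j) && (a == o0) && (b == o0))%:Z.
rewrite /A2.
transitivity (\sum_(s : 'S_4) ((-1)^+s * K s - (-1)^+s * L1 s + (-1)^+s * L2 s
    + (-1)^+s * L3 s - (-1)^+s * L4 s)).
  apply: eq_bigr => s _; rewrite /t4pprod !delta_term one4.
  match goal with |- context [@Algebra.natmul ?M ?x 2%N] =>
    rewrite (_ : @Algebra.natmul M x 2%N = o2); last by apply: val_inj end.
  rewrite /K /L1 /L2 /L3 /L4 /o0.
  rewrite -mulrBr -mulrDr -mulrDr -mulrBr; congr (_ * _).
  rewrite [s o2 == j]eq_sym [s o0 == a]eq_sym [s o1 == b]eq_sym.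
  case: (j == o0); case: (a == s o0); case: (b == s o1); case: (a == o0);
    case: (b == o0); case: (j == s o2); rewrite /= ?mul1r ?mul0r; lia.
rewrite -[LHS]/(\sum_(s : 'S_4) ((-1)^+s * K s - (-1)^+s * L1 s + (-1)^+s * L2 s + (-1)^+s * L3 s - (-1)^+s * L4 s) : int).
rewrite !big_split /= !sumrN.
rewrite (@sign_cancel o2 o3 K) ?add0r; last 2 first.
- by [].
- by move=> s; rewrite /K !permM !tpermD.
rewrite (@sign_cancel o0 o3 L2) ?addr0; last 2 first.
- by [].
- by move=> s; rewrite /L2 !permM !tpermD.
rewrite (@sign_cancel o1 o3 L3) ?addr0; last 2 first.
- by [].
- by move=> s; rewrite /L3 !permM !tpermD.
rewrite (@sign_cancel o0 o1 L4) ?subr0; last 2 first.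
- by [].
- by move=> s; rewrite /L4 !permM !tpermD.
by [].
Qed.

Lemma Cf_term f j a b : Cf f (t4term j a b) = f j a b.
Proof.
rewrite /Cf /= !ffunE.
have -> : ((ord0 : T4V) == ord0) = true := eqxx _.
have -> : ((vmax : T4V) == ord0) = false := erefl.
rewrite /=.
under eq_bigr => j' _ do rewrite (ind_eq j j').
rewrite mul1r (bigD1 j) //= eqxx mul1r big1 ?addr0 // => j' /negbTE.
by rewrite eq_sym => ->; rewrite mul0r.
Qed.

Lemma Cf_supp f g : Cf f g != 0 -> exists j a b, g = t4term j a b.
Proof.
case: g => m s; rewrite /Cf /=.
case E0: (s ord0) => [[h|]|] //; case E1: (s vmax) => [[h'|]|] //.
case H: ((h.1 == ord0) && (h'.1 == vmax)); last by rewrite mul0r eqxx.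
move/andP: H => [/eqP H0 /eqP H1].
case Hm: [exists j, m == ind j]; last first.
  rewrite big1 ?mulr0 ?eqxx // => j _.
  by move/negbT: Hm; rewrite negb_exists => /forallP /(_ j) /negbTE ->; rewrite mul0r.
move=> _; move/existsP: Hm => [j /eqP Hj].
exists j, h.2, h'.2; rewrite /t4term Hj; congr pair.
apply/ffunP => v; rewrite ffunE; case: (vcases v) => ->.
- by rewrite eqxx E0 -H0 -surjective_pairing.
- by rewrite /= E1 -H1 -surjective_pairing.
Qed.

Lemma is_term_dec (g : t4gen) :
  (exists j a b, g = t4term j a b) \/ (forall j a b, (g == t4term j a b) = false).
Proof.
case: (boolP [exists j, [exists a, [exists b, g == t4term j a b]]]).
- move/existsP => [j /existsP [a /existsP [b /eqP ->]]]; left; by exists j, a, b.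
- rewrite !negb_exists => /forallP H; right => j a b.
  by move: (H j); rewrite negb_exists => /forallP /(_ a); rewrite negb_exists => /forallP /(_ b) /negbTE.
Qed.

Lemma A2_Cf g : A2 g = Cf alpha g.
Proof.
case: (is_term_dec g) => [[j [a [b ->]]]|H]; first by rewrite A2_term Cf_term.
have -> : Cf alpha g = 0.
  apply/eqP; apply: contraT => /Cf_supp [j [a [b E]]].
  by move: (H j a b); rewrite E eqxx.
rewrite /A2 big1 // => s _.
by rewrite /t4pprod /delta !H /= !subrr ?add0r ?subrr mulr0.
Qed.

Lemma chain_Cf (z : t4gen -> int) : is_chain t4vert 2 3 z ->
  forall g, z g = Cf (fun j a b => z (t4term j a b)) g.
Proof.
move=> Hz g.
case: (is_term_dec g) => [[j [a [b ->]]]|H]; first by rewrite Cf_term.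
have -> : Cf (fun j a b => z (t4term j a b)) g = 0.
  apply/eqP; apply: contraT => /Cf_supp [j [a [b E]]].
  by move: (H j a b); rewrite E eqxx.
apply/eqP; apply: contraT => /Hz /support [j [a [b E]]].
by move: (H j a b); rewrite E eqxx.
Qed.

Definition ctab (j a b : 'I_4) : int :=
  match nat_of_ord j, nat_of_ord a, nat_of_ord b with
  | 3, 0, 1 => Negz 0
  | 3, 0, 2 => Posz 1
  | 3, 1, 0 => Posz 1
  | 3, 1, 2 => Negz 0
  | 3, 2, 0 => Negz 0
  | 3, 2, 1 => Posz 1
  | 2, 0, 1 => Posz 1
  | 2, 0, 3 => Negz 0
  | 2, 1, 0 => Negz 0
  | 2, 1, 3 => Posz 1
  | 2, 3, 0 => Posz 1
  | 2, 3, 1 => Negz 0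
  | 1, 0, 2 => Negz 0
  | 1, 0, 3 => Posz 1
  | 1, 2, 0 => Posz 1
  | 1, 2, 3 => Negz 0
  | 1, 3, 0 => Negz 0
  | 1, 3, 2 => Posz 1
  | 0, 1, 2 => Posz 1
  | 0, 1, 3 => Negz 0
  | 0, 2, 1 => Negz 0
  | 0, 2, 3 => Posz 1
  | 0, 3, 1 => Posz 1
  | 0, 3, 2 => Negz 0
  | _, _, _ => Posz 0
  end%N.

Lemma sum4 (F : 'I_4 -> int) : \sum_(b < 4) F b = F o0 + F o1 + F o2 + F o3.
Proof.
rewrite !big_ord_recl big_ord0 addr0 !addrA.
by repeat congr (_ + _); congr F; apply: val_inj.
Qed.

Lemma L3 (f : 'I_4 -> 'I_4 -> 'I_4 -> int) :
  (forall p q b, f p q b = - f q p b) ->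
  (forall p q a, f p a q = - f q a p) ->
  (forall j b, \sum_a f j a b = 0) ->
  (forall j a, \sum_b f j a b = 0) ->
  forall j a b, f j a b = f o2 o0 o1 * ctab j a b.
Proof.
move=> HA HB HR1 HR2.
have HR1' : forall j b, f j o0 b + f j o1 b + f j o2 b + f j o3 b = 0.
  by move=> j b; rewrite -(sum4 (fun a => f j a b)); exact: HR1.
have HR2' : forall j a, f j a o0 + f j a o1 + f j a o2 + f j a o3 = 0.
  by move=> j a; rewrite -(sum4 (fun b => f j a b)); exact: HR2.
have Z1 : forall p b, f p p b = 0 by move=> p b; have := HA p p b; lia.
have Z2 : forall p a, f p a p = 0 by move=> p a; have := HB p p a; lia.
have Z3 : forall p a, f p a a = 0 by move=> p a; have := HA p a a; rewrite Z2; lia.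
move=> j a b.
case: (ord4_cases j) => [->|[->|[->|->]]];
case: (ord4_cases a) => [->|[->|[->|->]]];
case: (ord4_cases b) => [->|[->|[->|->]]].
- by rewrite /ctab /= mulr0; first [exact: Z1 | exact: Z2 | exact: Z3].
- by rewrite /ctab /= mulr0; first [exact: Z1 | exact: Z2 | exact: Z3].
- by rewrite /ctab /= mulr0; first [exact: Z1 | exact: Z2 | exact: Z3].
- by rewrite /ctab /= mulr0; first [exact: Z1 | exact: Z2 | exact: Z3].
- by rewrite /ctab /= mulr0; first [exact: Z1 | exact: Z2 | exact: Z3].
- by rewrite /ctab /= mulr0; first [exact: Z1 | exact: Z2 | exact: Z3].
- rewrite /ctab /=; move: (HA o1 o0 o2); rewrite ?Z1 ?Z2 ?Z3 => ?; move: (HB o2 o1 o0); rewrite ?Z1 ?Z2 ?Z3 => ?; lia.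
- rewrite /ctab /=; move: (HR1' o0 o3); rewrite ?Z1 ?Z2 ?Z3 => ?; move: (HR2' o0 o2); rewrite ?Z1 ?Z2 ?Z3 => ?; move: (HA o2 o0 o1); rewrite ?Z1 ?Z2 ?Z3 => ?; lia.
- by rewrite /ctab /= mulr0; first [exact: Z1 | exact: Z2 | exact: Z3].
- rewrite /ctab /=; move: (HA o2 o0 o1); rewrite ?Z1 ?Z2 ?Z3 => ?; lia.
- by rewrite /ctab /= mulr0; first [exact: Z1 | exact: Z2 | exact: Z3].
- rewrite /ctab /=; move: (HR2' o0 o2); rewrite ?Z1 ?Z2 ?Z3 => ?; move: (HA o2 o0 o1); rewrite ?Z1 ?Z2 ?Z3 => ?; lia.
- by rewrite /ctab /= mulr0; first [exact: Z1 | exact: Z2 | exact: Z3].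
- rewrite /ctab /=; move: (HR1' o0 o1); rewrite ?Z1 ?Z2 ?Z3 => ?; move: (HA o2 o0 o1); rewrite ?Z1 ?Z2 ?Z3 => ?; lia.
- rewrite /ctab /=; move: (HR2' o0 o3); rewrite ?Z1 ?Z2 ?Z3 => ?; move: (HR1' o0 o1); rewrite ?Z1 ?Z2 ?Z3 => ?; move: (HA o2 o0 o1); rewrite ?Z1 ?Z2 ?Z3 => ?; lia.
- by rewrite /ctab /= mulr0; first [exact: Z1 | exact: Z2 | exact: Z3].
- by rewrite /ctab /= mulr0; first [exact: Z1 | exact: Z2 | exact: Z3].
- by rewrite /ctab /= mulr0; first [exact: Z1 | exact: Z2 | exact: Z3].
- rewrite /ctab /=; move: (HB o2 o1 o0); rewrite ?Z1 ?Z2 ?Z3 => ?; lia.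
- rewrite /ctab /=; move: (HR2' o1 o0); rewrite ?Z1 ?Z2 ?Z3 => ?; move: (HB o2 o1 o0); rewrite ?Z1 ?Z2 ?Z3 => ?; lia.
- by rewrite /ctab /= mulr0; first [exact: Z1 | exact: Z2 | exact: Z3].
- by rewrite /ctab /= mulr0; first [exact: Z1 | exact: Z2 | exact: Z3].
- by rewrite /ctab /= mulr0; first [exact: Z1 | exact: Z2 | exact: Z3].
- by rewrite /ctab /= mulr0; first [exact: Z1 | exact: Z2 | exact: Z3].
- rewrite /ctab /=; move: (HB o0 o1 o2); rewrite ?Z1 ?Z2 ?Z3 => ?; move: (HA o2 o0 o1); rewrite ?Z1 ?Z2 ?Z3 => ?; lia.
- by rewrite /ctab /= mulr0; first [exact: Z1 | exact: Z2 | exact: Z3].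
- by rewrite /ctab /= mulr0; first [exact: Z1 | exact: Z2 | exact: Z3].
- rewrite /ctab /=; move: (HR2' o1 o2); rewrite ?Z1 ?Z2 ?Z3 => ?; move: (HB o0 o1 o2); rewrite ?Z1 ?Z2 ?Z3 => ?; move: (HA o2 o0 o1); rewrite ?Z1 ?Z2 ?Z3 => ?; lia.
- rewrite /ctab /=; move: (HR1' o1 o0); rewrite ?Z1 ?Z2 ?Z3 => ?; move: (HB o0 o1 o2); rewrite ?Z1 ?Z2 ?Z3 => ?; move: (HA o2 o0 o1); rewrite ?Z1 ?Z2 ?Z3 => ?; lia.
- by rewrite /ctab /= mulr0; first [exact: Z1 | exact: Z2 | exact: Z3].
- rewrite /ctab /=; move: (HR1' o1 o2); rewrite ?Z1 ?Z2 ?Z3 => ?; move: (HB o2 o1 o0); rewrite ?Z1 ?Z2 ?Z3 => ?; lia.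
- by rewrite /ctab /= mulr0; first [exact: Z1 | exact: Z2 | exact: Z3].
- by rewrite /ctab /= mulr0; first [exact: Z1 | exact: Z2 | exact: Z3].
- rewrite /ctab /=;  lia.
- by rewrite /ctab /= mulr0; first [exact: Z1 | exact: Z2 | exact: Z3].
- rewrite /ctab /=; move: (HR2' o2 o0); rewrite ?Z1 ?Z2 ?Z3 => ?; lia.
- rewrite /ctab /=; move: (HA o1 o2 o0); rewrite ?Z1 ?Z2 ?Z3 => ?; move: (HB o0 o1 o2); rewrite ?Z1 ?Z2 ?Z3 => ?; move: (HA o2 o0 o1); rewrite ?Z1 ?Z2 ?Z3 => ?; lia.
- by rewrite /ctab /= mulr0; first [exact: Z1 | exact: Z2 | exact: Z3].
- by rewrite /ctab /= mulr0; first [exact: Z1 | exact: Z2 | exact: Z3].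
- rewrite /ctab /=; move: (HR1' o2 o3); rewrite ?Z1 ?Z2 ?Z3 => ?; move: (HR2' o2 o0); rewrite ?Z1 ?Z2 ?Z3 => ?; lia.
- by rewrite /ctab /= mulr0; first [exact: Z1 | exact: Z2 | exact: Z3].
- by rewrite /ctab /= mulr0; first [exact: Z1 | exact: Z2 | exact: Z3].
- by rewrite /ctab /= mulr0; first [exact: Z1 | exact: Z2 | exact: Z3].
- by rewrite /ctab /= mulr0; first [exact: Z1 | exact: Z2 | exact: Z3].
- rewrite /ctab /=; move: (HR2' o2 o3); rewrite ?Z1 ?Z2 ?Z3 => ?; move: (HR1' o2 o1); rewrite ?Z1 ?Z2 ?Z3 => ?; lia.
- rewrite /ctab /=; move: (HR1' o2 o1); rewrite ?Z1 ?Z2 ?Z3 => ?; lia.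
- by rewrite /ctab /= mulr0; first [exact: Z1 | exact: Z2 | exact: Z3].
- by rewrite /ctab /= mulr0; first [exact: Z1 | exact: Z2 | exact: Z3].
- by rewrite /ctab /= mulr0; first [exact: Z1 | exact: Z2 | exact: Z3].
- rewrite /ctab /=; move: (HA o0 o3 o1); rewrite ?Z1 ?Z2 ?Z3 => ?; move: (HR1' o0 o1); rewrite ?Z1 ?Z2 ?Z3 => ?; move: (HA o2 o0 o1); rewrite ?Z1 ?Z2 ?Z3 => ?; lia.
- rewrite /ctab /=; move: (HB o2 o3 o0); rewrite ?Z1 ?Z2 ?Z3 => ?; move: (HR2' o2 o0); rewrite ?Z1 ?Z2 ?Z3 => ?; lia.
- by rewrite /ctab /= mulr0; first [exact: Z1 | exact: Z2 | exact: Z3].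
- rewrite /ctab /=; move: (HA o1 o3 o0); rewrite ?Z1 ?Z2 ?Z3 => ?; move: (HR1' o1 o0); rewrite ?Z1 ?Z2 ?Z3 => ?; move: (HB o0 o1 o2); rewrite ?Z1 ?Z2 ?Z3 => ?; move: (HA o2 o0 o1); rewrite ?Z1 ?Z2 ?Z3 => ?; lia.
- by rewrite /ctab /= mulr0; first [exact: Z1 | exact: Z2 | exact: Z3].
- rewrite /ctab /=; move: (HA o1 o3 o2); rewrite ?Z1 ?Z2 ?Z3 => ?; move: (HR1' o1 o2); rewrite ?Z1 ?Z2 ?Z3 => ?; move: (HB o2 o1 o0); rewrite ?Z1 ?Z2 ?Z3 => ?; lia.
- by rewrite /ctab /= mulr0; first [exact: Z1 | exact: Z2 | exact: Z3].
- rewrite /ctab /=; move: (HB o0 o3 o2); rewrite ?Z1 ?Z2 ?Z3 => ?; move: (HR2' o0 o2); rewrite ?Z1 ?Z2 ?Z3 => ?; move: (HA o2 o0 o1); rewrite ?Z1 ?Z2 ?Z3 => ?; lia.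
- rewrite /ctab /=; move: (HA o2 o3 o1); rewrite ?Z1 ?Z2 ?Z3 => ?; move: (HR1' o2 o1); rewrite ?Z1 ?Z2 ?Z3 => ?; lia.
- by rewrite /ctab /= mulr0; first [exact: Z1 | exact: Z2 | exact: Z3].
- by rewrite /ctab /= mulr0; first [exact: Z1 | exact: Z2 | exact: Z3].
- by rewrite /ctab /= mulr0; first [exact: Z1 | exact: Z2 | exact: Z3].
- by rewrite /ctab /= mulr0; first [exact: Z1 | exact: Z2 | exact: Z3].
- by rewrite /ctab /= mulr0; first [exact: Z1 | exact: Z2 | exact: Z3].
- by rewrite /ctab /= mulr0; first [exact: Z1 | exact: Z2 | exact: Z3].
Qed.

Lemma ind2E (j k x : 'I_4) : ind2 j k x = ((x == j) + (x == k))%N.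
Proof. by rewrite ffunE. Qed.

Lemma ind2_eq p q j e :
  (ind2 p q == ind2 j e) = ((j == p) && (e == q)) || ((j == q) && (e == p)).
Proof.
apply/eqP/idP => [E|].
- have Ej := congr1 (fun f : mono T4E => f j) E.
  have Ee := congr1 (fun f : mono T4E => f e) E.
  move: Ej Ee; rewrite /= !ind2E !eqxx.
  case: (j =P p) => [->|jp].
  + by rewrite /=; case: (e == q) => //=; lia.
  + case: (j =P q) => [->|jq] /=; last by lia.
    by case: (e == p) => //=; lia.
- by case/orP => /andP [/eqP -> /eqP ->] //; rewrite ind2C.
Qed.

Lemma sum_delta (F : 'I_4 -> int) x : \sum_j (x == j)%:Z * F j = F x.
Proof.
rewrite (bigD1 x) //= eqxx mul1r big1 ?addr0 // => j /negbTE.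
by rewrite eq_sym => ->; rewrite mul0r.
Qed.

Lemma sum_delta2 (F : 'I_4 -> 'I_4 -> int) x y :
  \sum_e \sum_j ((j == x) && (e == y))%:Z * F j e = F x y.
Proof.
rewrite (bigD1 y) //= [X in _ + X]big1 ?addr0; last first.
  move=> e He; apply: big1 => j _; by rewrite (negbTE He) andbF mul0r.
under eq_bigr => j _ do rewrite eqxx andbT eq_sym.
by rewrite sum_delta.
Qed.

Lemma sum_pair (F : 'I_4 -> 'I_4 -> int) p q :
  \sum_e \sum_j (((j == p) && (e == q)) || ((j == q) && (e == p)))%:Z * F j e
  = if p == q then F p p else F p q + F q p.
Proof.
case: eqP => [<-|pq].
- under eq_bigr => e _ do under eq_bigr => j _ do rewrite orbb.
  by rewrite sum_delta2.
- have E : forall j e : 'I_4, (((j == p) && (e == q)) || ((j == q) && (e == p)))%:Z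
      = ((j == p) && (e == q))%:Z + ((j == q) && (e == p))%:Z :> int.
  { move=> j e; have pq' : (p == q) = false by apply/eqP.
    case: (j =P p) => [->|_]; case: (j =P q) => [E|_] /=; rewrite ?pq' /=;
    try (by case: pq; exact: E); by case: (e == p); case: (e == q). }
  under eq_bigr => e _ do under eq_bigr => j _ do rewrite E mulrDl.
  under eq_bigr => e _ do rewrite big_split.
  by rewrite big_split /= !sum_delta2.
Qed.

Lemma antisym_zero (F B : 'I_4 -> 'I_4 -> int) :
  (forall j e, F j e = - F e j) -> (forall j e, B j e = B e j) ->
  \sum_e \sum_j B j e * F j e = 0.
Proof.
move=> HF HB.
set S := \sum_e _.
have : S = - S.
  rewrite {1}/S exchange_big /= /S -sumrN; apply: eq_bigr => e _.
  rewrite -sumrN; apply: eq_bigr => j _; by rewrite HF HB mulrN.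
move=> H; lia.
Qed.

Lemma alpha_cycle g : sdiff t4vert t4edg (Cf alpha) g = 0.
Proof.
case: g => m s; rewrite sdiffCf.
case: (s ord0) => [[h|]|]; case: (s vmax) => [[h'|]|] //.
- rewrite exchange_big /=.
  under eq_bigr => j _ do rewrite -mulr_sumr alpha_rowb mulr0.
  by rewrite big1 ?mulr0.
- rewrite antisym_zero ?mulr0 ?oppr0 //.
    by move=> j e; rewrite alpha_jb.
  by move=> j e; rewrite ind2C.
- rewrite exchange_big /=.
  under eq_bigr => j _ do rewrite -mulr_sumr alpha_rowa mulr0.
  by rewrite big1 ?mulr0 ?oppr0.
- rewrite antisym_zero ?mulr0 //.
    by move=> j e; rewrite alpha_ja.
  by move=> j e; rewrite ind2C.
Qed.

Definition mkst (x y : option (option T4H)) : state T4V T4H :=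
  [ffun v => if v == ord0 then x else y].
Lemma mkst0 x y : mkst x y ord0 = x.
Proof. rewrite ffunE; have -> : ((ord0 : T4V) == ord0) = true := eqxx _. by []. Qed.
Lemma mkstm x y : mkst x y vmax = y.
Proof. rewrite ffunE; have -> : ((vmax : T4V) == ord0) = false := erefl. by []. Qed.

Lemma sdiff0 g : sdiff t4vert t4edg (fun _ => 0) g = 0.
Proof.
rewrite /sdiff big1 // => v _.
case: (g.2 v) => [[h|]|] //.
- by rewrite big1 ?oppr0 // => h _; rewrite mulr0.
- by rewrite big1 // => h _; rewrite mulr0 if_same.
Qed.

Lemma Cf_scale n f g : Cf (fun j a b => n * f j a b) g = n * Cf f g.
Proof.
case: g => m s; rewrite /Cf /=.
case: (s ord0) => [[h|]|]; case: (s vmax) => [[h'|]|]; rewrite ?mulr0 //.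
rewrite mulrCA; congr (_ * _); rewrite mulr_sumr; apply: eq_bigr => j _.
by rewrite mulrCA.
Qed.

Theorem mainTheorem4 :
  is_chain t4vert 2 3 A2 /\
  (forall g, sdiff t4vert t4edg A2 g = 0) /\
  (forall z : t4gen -> int,
     is_chain t4vert 2 3 z ->
     (forall g, sdiff t4vert t4edg z g = 0) ->
     exists (n : int) (b : t4gen -> int),
       is_chain t4vert 3 3 b /\
       forall g, z g = n * A2 g + sdiff t4vert t4edg b g).
Proof.
have A2E : A2 = Cf alpha := functional_extensionality _ _ A2_Cf.
split; [|split].
- move=> g; rewrite A2E => /Cf_supp [j [a [b ->]]]; exact: t4term_props.
- by move=> g; rewrite A2E alpha_cycle.
move=> z Hz Hc.
set fz := fun j a b => z (t4term j a b).
have zE : z = Cf fz := functional_extensionality _ _ (chain_Cf Hz).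
have HZ : forall g, sdiff t4vert t4edg (Cf fz) g = 0 by move=> g; rewrite -zE.
have HA : forall p q b, fz p q b = - fz q p b.
  move=> p q b; have := HZ (ind2 p q, mkst None (Some (Some (vmax, b)))).
  rewrite sdiffCf /= mkst0 mkstm /=.
  under eq_bigr => e _ do under eq_bigr => j _ do rewrite ind2_eq.
  by rewrite sum_pair; case: eqP => [->|_]; lia.
have HB : forall p q a, fz p a q = - fz q a p.
  move=> p q a; have := HZ (ind2 p q, mkst (Some (Some (ord0, a))) None).
  rewrite sdiffCf /= mkst0 mkstm /=.
  under eq_bigr => e _ do under eq_bigr => j _ do rewrite ind2_eq.
  by rewrite (sum_pair (fun j e => fz j a e)); case: eqP => [->|_]; lia.
have HR1 : forall j b, \sum_a fz j a b = 0.
  move=> j0 b; have := HZ (ind j0, mkst (Some None) (Some (Some (vmax, b)))).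
  rewrite sdiffCf /= mkst0 mkstm /=.
  under eq_bigr => e _ do under eq_bigr => j _ do rewrite ind_eq.
  under eq_bigr => e _ do rewrite sum_delta.
  by move/eqP; rewrite oppr_eq0 mul1r => /eqP.
have HR2 : forall j a, \sum_b fz j a b = 0.
  move=> j0 a; have := HZ (ind j0, mkst (Some (Some (ord0, a))) (Some None)).
  rewrite sdiffCf /= mkst0 mkstm /=.
  under eq_bigr => e _ do under eq_bigr => j _ do rewrite ind_eq.
  under eq_bigr => e _ do rewrite sum_delta.
  by move/eqP; rewrite mul1r => /eqP.
have L := L3 HA HB HR1 HR2.
have La := L3 alpha_ja (fun p q a => alpha_jb p a q) alpha_rowa alpha_rowb.
pose n := - fz o2 o0 o1.
exists n, (fun _ => 0); split; first by move=> g; rewrite eqxx.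
move=> g; rewrite sdiff0 addr0 A2E zE.
have -> : fz = fun j a b => n * alpha j a b.
  apply: functional_extensionality => j; apply: functional_extensionality => a.
  apply: functional_extensionality => b.
  by rewrite /n L La alpha201 mulN1r mulrNN.
by rewrite Cf_scale.
Qed.
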